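(* Let $f:(0,\infty)\to\mathbb{R}$ be defined by $$f(t)=\frac{e^{-t}}{-\log(1-e^{-t})}.$$ Then $f$ is nondecreasing on $(0,\infty)$, $\lim_{t\to0}f(t)=0$, $\lim_{t\to\infty}f(t)=1$, $1-f(t)\sim e^{-t}/2$ as $t\to\infty$, and $$\int_0^\infty\big(1-f(t)\big)\,dt=\gamma,$$ where $\gamma=-\Gamma'(1)$ is the Euler–Mascheroni constant.
   Context: $g\sim h$ means $g/h\to1$. *)

(* Defs.v *)
From Stdlib Require Import Reals.
From Coquelicot Require Import Coquelicot.
Open Scope R_scope.

Definition fE (t : R) : R := exp (- t) / (- ln (1 - exp (- t))).

Definition Gamma (s : R) : R :=
  RInt_gen (fun t => Rpower t (s - 1) * exp (- t)) (at_right 0) (Rbar_locally p_infty).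

Definition euler_gamma : R := - Derive Gamma 1.

(* Main.v *)
Require Import Defs.
From Stdlib Require Import Reals Lra Psatz.
From Coquelicot Require Import Coquelicot.
Open Scope R_scope.
Ltac req := match goal with |- ?a = ?b => change (@eq R a b) end; try change RinvImpl.Rinv with Rinv; unfold Rminus, Rdiv.
Ltac sc := repeat (match goal with |- _ /\ _ => split | |- True => exact I end); try lra.


Lemma exp_le x y : x <= y -> exp x <= exp y.
Proof. intros [H|H]; [left; apply exp_increasing; auto | subst; lra]. Qed.

Lemma ln_le x y : 0 < x -> x <= y -> ln x <= ln y.
Proof. intros Hx [H|H]; [left; apply ln_increasing; auto | subst; lra]. Qed.

Lemma ln_le_xm1 x : 0 < x -> ln x <= x - 1.
Proof. intros Hx. pose proof (exp_ineq1_le (ln x)). rewrite exp_ln in H; lra. Qed.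

Lemma is_derive_val (f : R -> R) x l l' : is_derive f x l -> l = l' -> is_derive f x l'.
Proof. intros H <-; exact H. Qed.

Lemma cont_of_derive (f : R -> R) x l : is_derive f x l -> continuous f x.
Proof. intros H. apply (ex_derive_continuous (K:=R_AbsRing) (V:=R_NormedModule)). exists l; exact H. Qed.

Lemma MONO (f df : R -> R) a b : a <= b ->
  (forall x, a <= x <= b -> is_derive f x (df x)) ->
  (forall x, a <= x <= b -> 0 <= df x) -> f a <= f b.
Proof.
  intros Hab Hd Hpos.
  destruct (MVT_gen f a b df) as [c [Hc Heq]].
  - intros x Hx. apply Hd. rewrite Rmin_left in Hx by lra. rewrite Rmax_right in Hx by lra. lra.
  - intros x Hx. apply continuity_pt_filterlim. apply (cont_of_derive f x (df x)).
    apply Hd. rewrite Rmin_left in Hx by lra. rewrite Rmax_right in Hx by lra. lra.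
  - rewrite Rmin_left in Hc by lra; rewrite Rmax_right in Hc by lra.
    specialize (Hpos c Hc). nra.
Qed.

Lemma lim_right0 (F : R -> R) l :
  (forall eps, 0 < eps -> exists d, 0 < d /\ forall x, 0 < x < d -> Rabs (F x - l) < eps) ->
  filterlim F (at_right 0) (locally l).
Proof.
  intros H P [eps HP].
  destruct (H eps (cond_pos eps)) as [d [Hd Hx]].
  exists (mkposreal d Hd). intros y Hy Hy0. apply HP. apply Hx.
  change (Rabs (y - 0) < d) in Hy. rewrite Rminus_0_r, Rabs_pos_eq in Hy; lra.
Qed.

Lemma lim_pinf (F : R -> R) l :
  (forall eps, 0 < eps -> exists M, forall x, M < x -> Rabs (F x - l) < eps) ->
  filterlim F (Rbar_locally p_infty) (locally l).
Proof.
  intros H P [eps HP]. destruct (H eps (cond_pos eps)) as [M HM].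
  exists M. intros x Hx. apply HP. change (Rabs (F x - l) < eps). apply HM; auto.
Qed.

Lemma lim_right0_inv F l : filterlim F (at_right 0) (locally l) ->
  forall eps, 0 < eps -> exists d, 0 < d /\ forall x, 0 < x < d -> Rabs (F x - l) < eps.
Proof.
  intros H eps Heps.
  destruct (H (fun y => Rabs (y - l) < eps)) as [d Hd].
  { exists (mkposreal eps Heps). intros y Hy. exact Hy. }
  exists d. split. apply cond_pos. intros x [Hx1 Hx2]. apply Hd; [| lra].
  change (Rabs (x - 0) < d). rewrite Rminus_0_r, Rabs_pos_eq; lra.
Qed.

Lemma lim_pinf_inv F l : filterlim F (Rbar_locally p_infty) (locally l) ->
  forall eps, 0 < eps -> exists M, forall x, M < x -> Rabs (F x - l) < eps.
Proof.
  intros H eps Heps.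
  destruct (H (fun y => Rabs (y - l) < eps)) as [M HM].
  { exists (mkposreal eps Heps). intros y Hy. exact Hy. }
  exists M. exact HM.
Qed.

Lemma cauchy_right0 (F : R -> R) :
  (forall eps, 0 < eps -> exists d, 0 < d /\ forall x y, 0 < x < d -> 0 < y < d -> Rabs (F x - F y) < eps) ->
  exists l, filterlim F (at_right 0) (locally l).
Proof.
  intros H. apply (proj1 (filterlim_locally_cauchy (U := R_CompleteSpace) (F := at_right 0) F)).
  intros eps. destruct (H eps (cond_pos eps)) as [d [Hd Hxy]].
  exists (fun x => 0 < x < d). split.
  - exists (mkposreal d Hd). intros y Hy Hy0. change (Rabs (y - 0) < d) in Hy.
    rewrite Rminus_0_r, Rabs_pos_eq in Hy; lra.
  - intros u v Hu Hv. change (Rabs (F v - F u) < eps). apply Hxy; auto.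
Qed.

Lemma cauchy_pinf (F : R -> R) :
  (forall eps, 0 < eps -> exists M, forall x y, M < x -> M < y -> Rabs (F x - F y) < eps) ->
  exists l, filterlim F (Rbar_locally p_infty) (locally l).
Proof.
  intros H. apply (proj1 (filterlim_locally_cauchy (U := R_CompleteSpace) (F := Rbar_locally p_infty) F)).
  intros eps. destruct (H eps (cond_pos eps)) as [M HM].
  exists (fun x => M < x). split.
  - exists M. auto.
  - intros u v Hu Hv. change (Rabs (F v - F u) < eps). apply HM; auto.
Qed.

Lemma lim_bound_right0 F l B : filterlim F (at_right 0) (locally l) ->
  (exists d, 0 < d /\ forall x, 0 < x < d -> Rabs (F x) <= B) -> Rabs l <= B.
Proof.
  intros H [d [Hd HB]]. apply Rnot_lt_le. intro Hlt.
  destruct (lim_right0_inv F l H (Rabs l - B)) as [d' [Hd' Hx]]. lra.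
  set (x := Rmin d d' / 2).
  assert (0 < Rmin d d') by (apply Rmin_glb_lt; lra).
  pose proof (Rmin_l d d'). pose proof (Rmin_r d d').
  specialize (HB x ltac:(unfold x; lra)). specialize (Hx x ltac:(unfold x; lra)).
  revert HB Hx Hlt. split_Rabs; lra.
Qed.

Lemma lim_bound_pinf F l B : filterlim F (Rbar_locally p_infty) (locally l) ->
  (exists M, forall x, M < x -> Rabs (F x) <= B) -> Rabs l <= B.
Proof.
  intros H [M HB]. apply Rnot_lt_le. intro Hlt.
  destruct (lim_pinf_inv F l H (Rabs l - B)) as [M' Hx]. lra.
  set (x := Rmax M M' + 1).
  pose proof (Rmax_l M M'). pose proof (Rmax_r M M').
  specialize (HB x ltac:(unfold x; lra)). specialize (Hx x ltac:(unfold x; lra)).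
  revert HB Hx Hlt. split_Rabs; lra.
Qed.

Lemma GEN (g F : R -> R) l0 l1 :
  (forall a b, 0 < a -> 0 < b -> is_RInt g a b (F b - F a)) ->
  filterlim F (at_right 0) (locally l0) ->
  filterlim F (Rbar_locally p_infty) (locally l1) ->
  is_RInt_gen g (at_right 0) (Rbar_locally p_infty) (l1 - l0).
Proof.
  intros HI H0 H1 P [eps HP].
  assert (He2 : 0 < eps/2) by (destruct eps; simpl; lra).
  destruct (lim_right0_inv F l0 H0 _ He2) as [d [Hd Hx]].
  destruct (lim_pinf_inv F l1 H1 _ He2) as [M HM].
  unfold filtermapi.
  apply (Filter_prod _ _ _ (fun a => 0 < a < d) (fun b => Rmax M 0 < b)).
  - exists (mkposreal d Hd). intros y Hy Hy0. change (Rabs (y - 0) < d) in Hy.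
    rewrite Rminus_0_r, Rabs_pos_eq in Hy; lra.
  - exists (Rmax M 0). auto.
  - intros a b Ha Hb. simpl. exists (F b - F a). split.
    + apply HI; [lra | pose proof (Rmax_r M 0); lra].
    + apply HP. change (Rabs (F b - F a - (l1 - l0)) < eps).
      specialize (Hx a Ha). assert (M < b) by (pose proof (Rmax_l M 0); lra).
      specialize (HM b H). revert Hx HM. split_Rabs; lra.
Qed.

Lemma BND (g k K : R -> R) a b I : a <= b -> is_RInt g a b I ->
  (forall t, a <= t <= b -> Rabs (g t) <= k t) ->
  (forall t, a <= t <= b -> is_derive K t (k t)) ->
  (forall t, a <= t <= b -> continuous k t) ->
  Rabs I <= K b - K a.
Proof.
  intros Hab HI Hg HK Hk.
  apply (norm_RInt_le g k a b I (K b - K a) Hab Hg HI).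
  apply (is_RInt_derive K k a b).
  - intros x Hx. rewrite Rmin_left, Rmax_right in Hx by lra. apply HK; lra.
  - intros x Hx. rewrite Rmin_left, Rmax_right in Hx by lra. apply Hk; lra.
Qed.

Lemma exRI (g : R -> R) a b : (forall t, 0 < t -> continuous g t) -> 0 < a -> 0 < b -> ex_RInt g a b.
Proof.
  intros Hc Ha Hb. apply (ex_RInt_continuous (V := R_CompleteNormedModule)). intros z Hz. apply Hc.
  assert (0 < Rmin a b) by (apply Rmin_glb_lt; lra). lra.
Qed.

Lemma PRIM_d (g : R -> R) y : (forall t, 0 < t -> continuous g t) -> 0 < y ->
  is_derive (RInt g 1) y (g y).
Proof.
  intros Hc Hy. apply (is_derive_RInt g (RInt g 1) 1 y); [| apply Hc; lra].
  exists (mkposreal (y/2) ltac:(lra)). intros b Hb. change (Rabs (b - y) < y/2) in Hb.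
  apply (RInt_correct (V := R_CompleteNormedModule)), exRI; auto; [lra | revert Hb; split_Rabs; lra].
Qed.

Lemma PRIM (g : R -> R) a b : (forall t, 0 < t -> continuous g t) -> 0 < a -> 0 < b ->
  is_RInt g a b (RInt g 1 b - RInt g 1 a).
Proof.
  intros Hc Ha Hb.
  assert (0 < Rmin a b) by (apply Rmin_glb_lt; lra).
  apply (is_RInt_derive (RInt g 1) g a b).
  - intros x Hx. apply PRIM_d; auto. lra.
  - intros x Hx. apply Hc. lra.
Qed.


Lemma sqrt_small y e : 0 < e -> 0 <= y -> y < e * e -> sqrt y < e.
Proof.
  intros He Hy Hye. pose proof (sqrt_sqrt y Hy). pose proof (sqrt_pos y).
  destruct (Rlt_or_le (sqrt y) e); auto. nra.
Qed.

Lemma CMP (g : R -> R) C : 0 <= C -> (forall t, 0 < t -> continuous g t) ->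
  (forall t, 0 < t <= 1 -> Rabs (g t) <= C / sqrt t) ->
  (forall t, 1 <= t -> Rabs (g t) <= C * exp (- t / 2)) ->
  exists l0 l1, filterlim (RInt g 1) (at_right 0) (locally l0) /\
     filterlim (RInt g 1) (Rbar_locally p_infty) (locally l1) /\ Rabs (l1 - l0) <= 4 * C.
Proof.
  intros HC Hc H0 H1.
  set (F := RInt g 1).
  assert (B0 : forall x y, 0 < x <= y -> y <= 1 -> Rabs (F y - F x) <= 2 * C * sqrt y - 2 * C * sqrt x).
  { intros x y Hx Hy.
    apply (BND g (fun t => C / sqrt t) (fun t => 2 * C * sqrt t) x y); try lra.
    - apply PRIM; auto; lra.
    - intros t Ht. apply H0; lra.
    - intros t Ht. assert (0 < sqrt t) by (apply sqrt_lt_R0; lra).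
      auto_derive; [lra|]. field. lra.
    - intros t Ht. assert (0 < sqrt t) by (apply sqrt_lt_R0; lra).
      apply (ex_derive_continuous (K:=R_AbsRing) (V:=R_NormedModule)).
      auto_derive. split; [lra|]. split; [lra | auto]. }
  assert (B1 : forall x y, 1 <= x <= y -> Rabs (F y - F x) <= - 2 * C * exp (- y / 2) - (- 2 * C * exp (- x / 2))).
  { intros x y Hx.
    apply (BND g (fun t => C * exp (- t / 2)) (fun t => - 2 * C * exp (- t / 2)) x y); try lra.
    - apply PRIM; auto; lra.
    - intros t Ht. apply H1; lra.
    - intros t Ht. auto_derive; [auto|]. req. unfold Rdiv. field.
    - intros t Ht. apply (ex_derive_continuous (K:=R_AbsRing) (V:=R_NormedModule)).
      auto_derive. auto. }
  assert (F1 : F 1 = 0) by (unfold F; exact (RInt_point (V := R_CompleteNormedModule) 1 g)).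
  assert (Hs : forall t, 0 <= t -> 0 <= sqrt t) by (intros; apply sqrt_pos).
  assert (Hs1 : forall t, 0 <= t <= 1 -> sqrt t <= 1).
  { intros t Ht. rewrite <- sqrt_1. apply sqrt_le_1; lra. }
  assert (He : forall t, 0 < exp t) by apply exp_pos.
  destruct (cauchy_right0 F) as [l0 Hl0].
  { intros eps Heps. set (e := eps / (2 * C + 1)).
    assert (0 < e) by (unfold e; apply Rdiv_lt_0_compat; lra).
    exists (Rmin 1 (e * e)). split. apply Rmin_glb_lt; nra.
    intros x y Hx Hy. pose proof (Rmin_l 1 (e*e)). pose proof (Rmin_r 1 (e*e)).
    assert (sqrt x < e) by (apply sqrt_small; lra).
    assert (sqrt y < e) by (apply sqrt_small; lra).
    assert (2 * C * e < eps).
    { unfold e. apply (Rmult_lt_reg_r (2*C+1)); [lra|]. field_simplify; [|lra]. nra. }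
    assert (0 <= sqrt x) by (apply Hs; lra). assert (0 <= sqrt y) by (apply Hs; lra).
    destruct (Rle_or_lt x y) as [Hxy|Hxy].
    - specialize (B0 x y ltac:(lra) ltac:(lra)). rewrite Rabs_minus_sym.
      apply Rle_lt_trans with (1 := B0). nra.
    - specialize (B0 y x ltac:(lra) ltac:(lra)).
      apply Rle_lt_trans with (1 := B0). nra. }
  destruct (cauchy_pinf F) as [l1 Hl1].
  { intros eps Heps. set (e := eps / (2 * C + 1)).
    assert (0 < e) by (unfold e; apply Rdiv_lt_0_compat; lra).
    assert (2 * C * e < eps).
    { unfold e. apply (Rmult_lt_reg_r (2*C+1)); [lra|]. field_simplify; [|lra]. nra. }
    exists (Rmax 1 (- 2 * ln e)). intros x y Hx Hy.
    pose proof (Rmax_l 1 (- 2 * ln e)). pose proof (Rmax_r 1 (- 2 * ln e)).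
    assert (Hex : exp (- x / 2) <= e).
    { rewrite <- (exp_ln e) by lra. apply exp_le. lra. }
    assert (Hey : exp (- y / 2) <= e).
    { rewrite <- (exp_ln e) by lra. apply exp_le. lra. }
    pose proof (He (-x/2)). pose proof (He (-y/2)).
    destruct (Rle_or_lt x y) as [Hxy|Hxy].
    - specialize (B1 x y ltac:(lra)). rewrite Rabs_minus_sym.
      apply Rle_lt_trans with (1 := B1). nra.
    - specialize (B1 y x ltac:(lra)).
      apply Rle_lt_trans with (1 := B1). nra. }
  exists l0, l1. split; [exact Hl0|]. split; [exact Hl1|].
  assert (Hb0 : Rabs l0 <= 2 * C).
  { apply (lim_bound_right0 F l0 _ Hl0). exists 1. split; [lra|]. intros x Hx.
    specialize (B0 x 1 ltac:(lra) ltac:(lra)). rewrite F1, sqrt_1 in B0.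
    rewrite Rabs_minus_sym, Rminus_0_r in B0. pose proof (Hs x ltac:(lra)). nra. }
  assert (Hb1 : Rabs l1 <= 2 * C).
  { apply (lim_bound_pinf F l1 _ Hl1). exists 1. intros x Hx.
    specialize (B1 1 x ltac:(lra)). rewrite F1, Rminus_0_r in B1.
    pose proof (He (-x/2)). assert (exp (- (1)/2) <= 1) by (apply Rle_trans with (exp 0); [apply exp_le; lra | rewrite exp_0; lra]).
    eapply Rle_trans; [exact B1|]. nra. }
  revert Hb0 Hb1. split_Rabs; lra.
Qed.


Definition LL (t : R) : R := - ln (1 - exp (- t)).

Lemma u_bounds t : 0 < t -> 0 < exp (- t) < 1.
Proof.
  intros Ht. split. apply exp_pos. rewrite <- exp_0. apply exp_increasing. lra.
Qed.

Lemma one_m_exp t : 0 <= t -> 1 - exp (- t) <= t.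
Proof. intros Ht. pose proof (exp_ineq1_le (- t)). lra. Qed.

Lemma F2 u : 0 < u < 1 -> u <= - ln (1 - u) <= u / (1 - u).
Proof.
  intros Hu. split.
  - pose proof (ln_le_xm1 (1 - u) ltac:(lra)). lra.
  - assert (E : - ln (1 - u) = ln (/ (1 - u))) by (rewrite ln_Rinv; lra).
    rewrite E. pose proof (ln_le_xm1 (/ (1 - u))).
    assert (0 < / (1 - u)) by (apply Rinv_0_lt_compat; lra).
    specialize (H H0).
    assert (/ (1 - u) - 1 = u / (1 - u)) by (field; lra). lra.
Qed.

Lemma F3 u : 0 < u <= 1/2 -> u + u^2/2 <= - ln (1 - u) <= u + u^2/2 + u^3.
Proof.
  intros Hu. split.
  - assert (H : (fun s => - ln (1 - s) - s - s^2/2) 0 <= (fun s => - ln (1 - s) - s - s^2/2) u).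
    { apply (MONO (fun s => - ln (1 - s) - s - s^2/2) (fun s => s^2 / (1 - s)) 0 u ltac:(lra)).
      + intros x Hx. auto_derive; [lra|]. req. field. lra.
      + intros x Hx. apply Rdiv_le_0_compat; [nra | lra]. }
    simpl in H. replace (ln (1 - 0)) with 0 in H by (rewrite Rminus_0_r, ln_1; reflexivity).
    nra.
  - assert (H : (fun s => s + s^2/2 + s^3 + ln (1 - s)) 0 <= (fun s => s + s^2/2 + s^3 + ln (1 - s)) u).
    { apply (MONO (fun s => s + s^2/2 + s^3 + ln (1 - s)) (fun s => s^2 * (2 - 3 * s) / (1 - s)) 0 u ltac:(lra)).
      + intros x Hx. auto_derive; [lra|]. req. field. lra.
      + intros x Hx. apply Rdiv_le_0_compat; [nra | lra]. }
    simpl in H. replace (ln (1 - 0)) with 0 in H by (rewrite Rminus_0_r, ln_1; reflexivity).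
    nra.
Qed.

Lemma LL_pos t : 0 < t -> 0 < LL t.
Proof. intros Ht. pose proof (u_bounds t Ht). pose proof (F2 (exp (- t)) H). unfold LL. lra. Qed.

Lemma fE_LL t : fE t = exp (- t) / LL t.
Proof. reflexivity. Qed.

Lemma part1 : forall x y : R, 0 < x -> x <= y -> fE x <= fE y.
Proof.
  intros x y Hx Hxy.
  apply (MONO fE (fun t => exp (- t) * (exp (- t) / (1 - exp (- t)) - LL t) / (LL t)^2) x y Hxy).
  - intros t Ht. pose proof (u_bounds t ltac:(lra)). pose proof (LL_pos t ltac:(lra)).
    unfold fE. auto_derive.
    + split; [lra|]. split; [intro Habs; unfold LL, Rminus in H0; lra | auto].
    + unfold LL, Rminus in *. req. field. split; lra.
  - intros t Ht. pose proof (u_bounds t ltac:(lra)). pose proof (LL_pos t ltac:(lra)).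
    pose proof (F2 (exp (- t)) H). unfold LL in *.
    apply Rdiv_le_0_compat; [|nra]. apply Rmult_le_pos; lra.
Qed.

Lemma LL_ge_mlnx x : 0 < x -> - ln x <= LL x.
Proof.
  intros Hx. unfold LL. pose proof (u_bounds x Hx).
  pose proof (one_m_exp x ltac:(lra)). apply Ropp_le_contravar. apply ln_le; lra.
Qed.

Lemma part2 : filterlim fE (at_right 0) (locally 0).
Proof.
  apply lim_right0. intros eps Heps.
  exists (exp (- (/ eps))). split. apply exp_pos.
  intros x [Hx0 Hx]. pose proof (u_bounds x Hx0). pose proof (LL_pos x Hx0).
  pose proof (LL_ge_mlnx x Hx0).
  assert (ln x < - / eps).
  { rewrite <- (ln_exp (- / eps)). apply ln_increasing; lra. }
  assert (Hl : / eps < LL x) by lra.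
  rewrite Rminus_0_r, fE_LL. rewrite Rabs_pos_eq by (apply Rlt_le, Rdiv_lt_0_compat; lra).
  apply Rlt_le_trans with (/ LL x).
  - unfold Rdiv. assert (0 < / LL x) by (apply Rinv_0_lt_compat; lra). nra.
  - rewrite <- (Rinv_inv eps). apply Rlt_le, Rinv_lt_contravar; [|exact Hl].
    apply Rmult_lt_0_compat; [apply Rinv_0_lt_compat|]; lra.
Qed.

Lemma absdiv_lt N D eps : 0 < D -> Rabs N < eps * D -> Rabs (N / D) < eps.
Proof.
  intros HD H. unfold Rdiv. rewrite Rabs_mult, Rabs_inv, (Rabs_pos_eq D) by lra.
  apply (Rmult_lt_reg_r D); [lra|]. rewrite Rmult_assoc, Rinv_l by lra. lra.
Qed.

Lemma exp1_gt2 : 2 < exp 1.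
Proof. pose proof (exp_ineq1 1). lra. Qed.

Lemma u_small e : 0 < e -> exists M, forall x, M < x -> 0 < exp (- x) <= 1/2 /\ exp (- x) < e.
Proof.
  intros He. exists (Rmax 1 (- ln e)). intros x Hx.
  pose proof (Rmax_l 1 (- ln e)). pose proof (Rmax_r 1 (- ln e)).
  split; [split|].
  - apply exp_pos.
  - assert (exp (- x) < exp (- (1))) by (apply exp_increasing; lra).
    rewrite (exp_Ropp 1) in H1. pose proof exp1_gt2.
    assert (/ exp 1 < / 2) by (apply Rinv_lt_contravar; [pose proof (exp_pos 1); nra | lra]). lra.
  - rewrite <- (exp_ln e) by lra. apply exp_increasing. lra.
Qed.

Lemma part3 : is_lim fE p_infty 1.
Proof.
  apply lim_pinf. intros eps Heps.
  destruct (u_small eps Heps) as [M HM]. exists (Rmax M 0). intros x Hx.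
  pose proof (Rmax_l M 0). pose proof (Rmax_r M 0).
  destruct (HM x ltac:(lra)) as [Hu Hue].
  set (u := exp (- x)) in *.
  pose proof (F3 u ltac:(lra)). rewrite fE_LL. unfold LL. fold u.
  set (L := - ln (1 - u)) in *.
  replace (u / L - 1) with ((u - L) / L) by (field; nra).
  apply absdiv_lt; [nra|]. rewrite Rabs_left1 by nra. nra.
Qed.

Lemma part4 : is_lim (fun t => (1 - fE t) / (exp (- t) / 2)) p_infty 1.
Proof.
  apply lim_pinf. intros eps Heps.
  destruct (u_small (eps/3) ltac:(lra)) as [M HM]. exists (Rmax M 0). intros x Hx.
  pose proof (Rmax_l M 0). pose proof (Rmax_r M 0).
  destruct (HM x ltac:(lra)) as [Hu Hue].
  rewrite fE_LL. unfold LL. set (u := exp (- x)) in *.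
  pose proof (F3 u ltac:(lra)).
  set (L := - ln (1 - u)) in *.
  set (e := L - u - u^2/2).
  assert (He : 0 <= e <= u^3) by (unfold e; lra).
  replace ((1 - u / L) / (u / 2) - 1) with ((2 * e - u^3/2 - u * e) / (u * L))
    by (unfold e; field; split; nra).
  apply absdiv_lt; [nra|].
  assert (Rabs (2 * e - u ^ 3 / 2 - u * e) <= 3 * u^3).
  { apply Rabs_le. split; nra. }
  assert (u * u <= u * L) by nra.
  assert (0 < (eps - 3 * u) * (u * u)) by (apply Rmult_lt_0_compat; nra).
  assert (0 <= eps * (u * L - u * u)) by (apply Rmult_le_pos; lra).
  nra.
Qed.


Definition g1 (s : R) : R := exp (- s) / s.
Definition P : R -> R := RInt g1 1.
Definition Q (y : R) : R := P y - ln y.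

Lemma g1_cont t : 0 < t -> continuous g1 t.
Proof.
  intros Ht. apply (ex_derive_continuous (K:=R_AbsRing) (V:=R_NormedModule)).
  unfold g1. auto_derive. sc.
Qed.

Lemma P_d y : 0 < y -> is_derive P y (g1 y).
Proof. intros Hy. apply PRIM_d; auto. apply g1_cont. Qed.

Lemma P_I a b : 0 < a -> 0 < b -> is_RInt g1 a b (P b - P a).
Proof. intros. apply PRIM; auto. apply g1_cont. Qed.

Lemma Q_d y : 0 < y -> is_derive Q y ((exp (- y) - 1) / y).
Proof.
  intros Hy. unfold Q.
  eapply is_derive_val.
  - apply (is_derive_minus (K := R_AbsRing) (V := R_NormedModule) P ln y). apply P_d; auto.
    apply (is_derive_val ln y (/ y)). apply is_derive_Reals, derivable_pt_lim_ln; auto. reflexivity.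
  - unfold g1. change (exp (- y) / y - / y = (exp (- y) - 1) / y). field. lra.
Qed.

Lemma Q0_ex : exists Q0, filterlim Q (at_right 0) (locally Q0).
Proof.
  apply cauchy_right0. intros eps Heps.
  assert (B : forall x y, 0 < x <= y -> Rabs (Q y - Q x) <= y - x).
  { intros x y Hxy.
    apply (BND (fun s => (exp (- s) - 1) / s) (fun _ => 1) (fun s => s) x y); try lra.
    - apply (is_RInt_derive Q (fun s => (exp (- s) - 1) / s) x y).
      + intros t Ht. rewrite Rmin_left, Rmax_right in Ht by lra. apply Q_d; lra.
      + intros t Ht. rewrite Rmin_left, Rmax_right in Ht by lra.
        apply (ex_derive_continuous (K:=R_AbsRing) (V:=R_NormedModule)).
        auto_derive. sc.
    - intros t Ht. pose proof (one_m_exp t ltac:(lra)). pose proof (u_bounds t ltac:(lra)).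
      unfold Rdiv. rewrite Rabs_mult, Rabs_inv, (Rabs_pos_eq t) by lra.
      rewrite Rabs_left1 by lra. apply (Rmult_le_reg_r t); [lra|].
      rewrite Rmult_assoc, Rinv_l by lra. lra.
    - intros t Ht. auto_derive; auto.
    - intros t Ht. apply continuous_const. }
  exists eps. split; auto. intros x y Hx Hy.
  destruct (Rle_or_lt x y) as [Hxy|Hxy].
  - specialize (B x y ltac:(lra)). rewrite Rabs_minus_sym. lra.
  - specialize (B y x ltac:(lra)). lra.
Qed.

Lemma Pinf_ex : exists Pinf, filterlim P (Rbar_locally p_infty) (locally Pinf).
Proof.
  apply cauchy_pinf. intros eps Heps.
  assert (B : forall x y, 1 <= x <= y -> Rabs (P y - P x) <= exp (- x) - exp (- y)).
  { intros x y Hxy.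
    replace (exp (- x) - exp (- y)) with ((fun s => - exp (- s)) y - (fun s => - exp (- s)) x) by (simpl; ring).
    apply (BND g1 (fun s => exp (- s)) (fun s => - exp (- s)) x y); try lra.
    - apply P_I; lra.
    - intros t Ht. unfold g1. pose proof (exp_pos (- t)).
      unfold Rdiv. rewrite Rabs_mult, Rabs_inv, (Rabs_pos_eq t), Rabs_pos_eq by lra.
      apply (Rmult_le_reg_r t); [lra|]. rewrite Rmult_assoc, Rinv_l by lra. nra.
    - intros t Ht. auto_derive; auto. req. ring.
    - intros t Ht. apply (ex_derive_continuous (K:=R_AbsRing) (V:=R_NormedModule)).
      auto_derive. auto. }
  exists (Rmax 1 (- ln eps)). intros x y Hx Hy.
  pose proof (Rmax_l 1 (- ln eps)). pose proof (Rmax_r 1 (- ln eps)).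
  assert (Hex : forall z, Rmax 1 (- ln eps) < z -> exp (- z) < eps).
  { intros z Hz. rewrite <- (exp_ln eps) by lra. apply exp_increasing. lra. }
  pose proof (exp_pos (- x)). pose proof (exp_pos (- y)).
  pose proof (Hex x Hx). pose proof (Hex y Hy).
  destruct (Rle_or_lt x y) as [Hxy|Hxy].
  - specialize (B x y ltac:(lra)). rewrite Rabs_minus_sym. lra.
  - specialize (B y x ltac:(lra)). lra.
Qed.


Definition FI (x : R) : R := x + P (LL x).

Lemma LL_d x : 0 < x -> is_derive LL x (- (exp (- x) / (1 - exp (- x)))).
Proof. intros Hx. pose proof (u_bounds x Hx). unfold LL. auto_derive. sc. req. field. lra. Qed.

Lemma exp_mLL x : 0 < x -> exp (- LL x) = 1 - exp (- x).
Proof. intros Hx. pose proof (u_bounds x Hx). unfold LL. rewrite Ropp_involutive, exp_ln; lra. Qed.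

Lemma FI_d x : 0 < x -> is_derive FI x (1 - fE x).
Proof.
  intros Hx. pose proof (u_bounds x Hx). pose proof (LL_pos x Hx).
  unfold FI. eapply is_derive_val.
  - apply (is_derive_plus (K:=R_AbsRing) (V:=R_NormedModule) (fun x => x) (fun x => P (LL x))).
    + apply (is_derive_id (K:=R_AbsRing)).
    + apply (is_derive_comp P LL x). apply P_d; auto. apply LL_d; auto.
  - change (1 + (- (exp (- x) / (1 - exp (- x)))) * g1 (LL x) = 1 - fE x).
    unfold g1. rewrite exp_mLL by auto. rewrite fE_LL. field. split; lra.
Qed.

Lemma fE_cont t : 0 < t -> continuous (fun t => 1 - fE t) t.
Proof.
  intros Ht. pose proof (u_bounds t Ht). pose proof (LL_pos t Ht).
  apply (ex_derive_continuous (K:=R_AbsRing) (V:=R_NormedModule)).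
  unfold fE. auto_derive. unfold LL, Rminus in *. sc.
Qed.

Lemma FI_lim0 Pinf : filterlim P (Rbar_locally p_infty) (locally Pinf) -> filterlim FI (at_right 0) (locally Pinf).
Proof.
  intros HP. apply lim_right0. intros eps Heps.
  destruct (lim_pinf_inv P Pinf HP (eps/2) ltac:(lra)) as [M HM].
  exists (Rmin (eps/2) (exp (- M))). split. apply Rmin_glb_lt; [lra | apply exp_pos].
  intros x [Hx0 Hx]. pose proof (Rmin_l (eps/2) (exp (- M))). pose proof (Rmin_r (eps/2) (exp (-M))).
  pose proof (LL_ge_mlnx x Hx0).
  assert (ln x < - M) by (rewrite <- (ln_exp (- M)); apply ln_increasing; lra).
  specialize (HM (LL x) ltac:(lra)). unfold FI.
  revert HM. split_Rabs; lra.
Qed.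

Lemma FI_liminf Q0 : filterlim Q (at_right 0) (locally Q0) -> filterlim FI (Rbar_locally p_infty) (locally Q0).
Proof.
  intros HQ. apply lim_pinf. intros eps Heps.
  destruct (lim_right0_inv Q Q0 HQ (eps/2) ltac:(lra)) as [d [Hd HQd]].
  destruct (u_small (Rmin (d/2) (eps/4)) ltac:(apply Rmin_glb_lt; lra)) as [M HM].
  exists (Rmax M 0). intros x Hx. pose proof (Rmax_l M 0). pose proof (Rmax_r M 0).
  destruct (HM x ltac:(lra)) as [Hu Hue].
  pose proof (Rmin_l (d/2) (eps/4)). pose proof (Rmin_r (d/2) (eps/4)).
  pose proof (F2 (exp (- x)) ltac:(lra)) as HF.
  pose proof (LL_pos x ltac:(lra)) as HLp.
  assert (HLd : LL x = - ln (1 - exp (- x))) by reflexivity.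
  assert (Hlnu : ln (exp (- x)) = - x) by apply ln_exp.
  set (u := exp (- x)) in *.
  assert (HL2 : LL x <= 2 * u).
  { assert (2*u - u/(1-u) = u*(1-2*u)/(1-u)) by (field; lra).
    assert (0 <= u*(1-2*u)/(1-u)) by (apply Rdiv_le_0_compat; nra).
    lra. }
  assert (Hln1 : 0 <= x + ln (LL x)).
  { pose proof (ln_le u (LL x) ltac:(lra) ltac:(lra)). lra. }
  assert (Hln2 : x + ln (LL x) <= LL x).
  { pose proof (ln_le (LL x) (u * / (1 - u)) ltac:(lra) ltac:(unfold Rdiv in HF; lra)) as Hq.
    rewrite ln_mult, ln_Rinv in Hq by (try apply Rinv_0_lt_compat; lra). lra. }
  specialize (HQd (LL x) ltac:(lra)). unfold Q in HQd. unfold FI.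
  revert HQd. split_Rabs; lra.
Qed.

Lemma I_val Q0 Pinf : filterlim Q (at_right 0) (locally Q0) -> filterlim P (Rbar_locally p_infty) (locally Pinf) ->
  is_RInt_gen (fun t => 1 - fE t) (at_right 0) (Rbar_locally p_infty) (Q0 - Pinf).
Proof.
  intros HQ HP. apply (GEN _ FI).
  - intros a b Ha Hb.
    assert (0 < Rmin a b) by (apply Rmin_glb_lt; lra).
    apply (is_RInt_derive FI (fun t => 1 - fE t) a b).
    + intros x Hx. apply FI_d. lra.
    + intros x Hx. apply fE_cont. lra.
  - apply FI_lim0; auto.
  - apply FI_liminf; auto.
Qed.


Lemma cpt_of_derive (f : R -> R) x l : is_derive f x l -> continuity_pt f x.
Proof. intros H. apply continuity_pt_filterlim. exact (cont_of_derive f x l H). Qed.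

Lemma exp_taylor2 y : Rabs (exp y - 1 - y) <= y^2 * exp (Rabs y).
Proof.
  destruct (MVT_gen (fun s => exp s - s) 0 y (fun s => exp s - 1)) as [c [Hc Hc']].
  - intros x _. auto_derive; auto. req. ring.
  - intros x _. apply (cpt_of_derive _ x (exp x - 1)). auto_derive; auto. req. ring.
  - destruct (MVT_gen exp 0 c exp) as [d [Hd Hd']].
    + intros x _. apply is_derive_Reals, derivable_pt_lim_exp.
    + intros x _. apply derivable_continuous_pt, derivable_pt_exp.
    + simpl in Hc'. rewrite exp_0 in Hc', Hd'.
      assert (E : exp y - 1 - y = exp d * c * y).
      { replace (exp y - 1 - y) with (exp y - y - (1 - 0)) by ring. rewrite Hc'. rewrite Hd'. ring. }
      rewrite E.
      assert (Hcy : Rabs c <= Rabs y).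
      { revert Hc. unfold Rmin, Rmax. destruct (Rle_dec 0 y); split_Rabs; lra. }
      assert (Hdc : Rabs d <= Rabs c).
      { revert Hd. unfold Rmin, Rmax. destruct (Rle_dec 0 c); split_Rabs; lra. }
      assert (Hed : exp d <= exp (Rabs y)).
      { apply exp_le. revert Hcy Hdc. split_Rabs; lra. }
      rewrite !Rabs_mult, (Rabs_pos_eq (exp d)) by (left; apply exp_pos).
      assert (Rabs c * Rabs y <= y^2).
      { replace (y^2) with (Rabs y * Rabs y) by (rewrite <- Rabs_mult; simpl; rewrite Rmult_1_r; apply Rabs_pos_eq; nra).
        pose proof (Rabs_pos y). pose proof (Rabs_pos c). nra. }
      pose proof (Rabs_pos y). pose proof (Rabs_pos c). pose proof (exp_pos d).
      pose proof (exp_pos (Rabs y)).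
      assert (0 <= Rabs c * Rabs y) by nra.
      nra.
Qed.

Lemma exp_quad v : 0 <= v -> 1 + v + v^2/2 <= exp v.
Proof.
  intros Hv.
  assert (H : (fun s => exp s - 1 - s - s^2/2) 0 <= (fun s => exp s - 1 - s - s^2/2) v).
  { apply (MONO (fun s => exp s - 1 - s - s^2/2) (fun s => exp s - 1 - s) 0 v Hv).
    - intros x _. auto_derive; auto. req. field.
    - intros x _. pose proof (exp_ineq1_le x). lra. }
  simpl in H. rewrite exp_0 in H. lra.
Qed.

Lemma sq_le_exp w : 0 <= w -> w^2 <= 32 * exp (w / 4).
Proof. intros Hw. pose proof (exp_quad (w/4) ltac:(lra)). nra. Qed.

Lemma sqrt_exp t : 0 < t -> sqrt t = exp (ln t / 2).
Proof.
  intros Ht. apply sqrt_lem_1; [lra | left; apply exp_pos |].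
  rewrite <- exp_plus. replace (ln t / 2 + ln t / 2) with (ln t) by field. apply exp_ln; auto.
Qed.

Definition Rh (h t : R) : R := exp (h * ln t) * exp (- t) - exp (- t) - h * (ln t * exp (- t)).

Lemma Rh_cont h t : 0 < t -> continuous (Rh h) t.
Proof.
  intros Ht. apply (ex_derive_continuous (K:=R_AbsRing) (V:=R_NormedModule)).
  unfold Rh. auto_derive. sc.
Qed.

Lemma Rh_gen h t : 0 < t -> Rabs h <= 1/4 ->
  Rabs (Rh h t) <= exp (- t) * (h^2 * (ln t)^2 * exp (Rabs (ln t) / 4)).
Proof.
  intros Ht Hh. unfold Rh.
  replace (exp (h * ln t) * exp (- t) - exp (- t) - h * (ln t * exp (- t)))
    with (exp (- t) * (exp (h * ln t) - 1 - h * ln t)) by ring.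
  rewrite Rabs_mult, (Rabs_pos_eq (exp (- t))) by (left; apply exp_pos).
  apply Rmult_le_compat_l; [left; apply exp_pos|].
  eapply Rle_trans; [apply exp_taylor2|].
  replace ((h * ln t)^2) with (h^2 * (ln t)^2) by ring.
  apply Rmult_le_compat_l; [nra|].
  apply exp_le. rewrite Rabs_mult. pose proof (Rabs_pos (ln t)). nra.
Qed.

Lemma Rh_b0 h t : 0 < t <= 1 -> Rabs h <= 1/4 -> Rabs (Rh h t) <= 32 * h^2 / sqrt t.
Proof.
  intros Ht Hh. eapply Rle_trans; [apply Rh_gen; lra|].
  assert (Hz : ln t <= 0) by (rewrite <- ln_1; apply ln_le; lra).
  rewrite Rabs_left1 by lra.
  set (z := - ln t) in *.
  replace ((ln t)^2) with (z^2) by (unfold z; ring).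
  pose proof (sq_le_exp z ltac:(unfold z; lra)).
  assert (Hst : / sqrt t = exp (z / 2)).
  { rewrite sqrt_exp by lra. rewrite <- exp_Ropp. f_equal. unfold z. field. }
  replace (32 * h ^ 2 / sqrt t) with (32 * h ^ 2 * / sqrt t) by reflexivity. rewrite Hst.
  assert (exp (- t) <= 1) by (pose proof (u_bounds t ltac:(lra)); lra).
  assert (exp (z/4) * exp (z/4) = exp (z/2)) by (rewrite <- exp_plus; f_equal; field).
  pose proof (exp_pos (z/4)). pose proof (exp_pos (- t)).
  assert (0 <= h^2) by nra.
  assert (z^2 * exp (z/4) <= 32 * exp (z/2)).
  { rewrite <- H1. replace (32 * (exp (z / 4) * exp (z / 4))) with (32 * exp (z/4) * exp (z/4)) by ring.
    apply Rmult_le_compat_r; lra. }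
  assert (0 <= h ^ 2 * z ^ 2 * exp (z / 4)) by (pose proof (pow2_ge_0 z); apply Rmult_le_pos; [nra|lra]).
  apply Rle_trans with (1 * (h ^ 2 * z ^ 2 * exp (z / 4))).
  - apply Rmult_le_compat_r; lra.
  - rewrite Rmult_1_l.
    assert (h^2 * (z^2*exp(z/4)) <= h^2 * (32*exp(z/2))) by (apply Rmult_le_compat_l; lra). lra.
Qed.

Lemma Rh_b1 h t : 1 <= t -> Rabs h <= 1/4 -> Rabs (Rh h t) <= 32 * h^2 * exp (- t / 2).
Proof.
  intros Ht Hh. eapply Rle_trans; [apply Rh_gen; lra|].
  assert (Hz : 0 <= ln t) by (rewrite <- ln_1; apply ln_le; lra).
  pose proof (ln_le_xm1 t ltac:(lra)).
  rewrite Rabs_pos_eq by lra.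
  assert (H1 : (ln t)^2 <= t^2) by nra.
  pose proof (sq_le_exp t ltac:(lra)).
  assert (H3 : exp (ln t / 4) <= exp (t / 4)) by (apply exp_le; lra).
  assert (E : exp (- t) * exp (t/4) * exp (t/4) = exp (- t / 2)) by (rewrite <- !exp_plus; f_equal; field).
  pose proof (exp_pos (ln t / 4)). pose proof (exp_pos (t/4)). pose proof (exp_pos (- t)).
  assert (0 <= h^2) by nra.
  apply Rle_trans with (exp (- t) * (h^2 * (32 * exp (t/4)) * exp (t/4))).
  - assert (A1: h^2 * (ln t)^2 <= h^2 * (32 * exp(t/4))) by (apply Rmult_le_compat_l; nra).
    assert (A2 : 0 <= h^2*(ln t)^2) by nra.
    apply Rmult_le_compat_l; [lra|]. apply Rmult_le_compat; lra.
  - replace (32 * h ^ 2 * exp (- t / 2)) with (h^2 * 32 * (exp (- t) * exp (t/4) * exp (t/4))) by (rewrite E; ring).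
    right; ring.
Qed.



Lemma lim3 {F : (R -> Prop) -> Prop} {FF : Filter F} (f1 f2 f3 : R -> R) a b c h :
  filterlim f1 F (locally a) -> filterlim f2 F (locally b) -> filterlim f3 F (locally c) ->
  filterlim (fun x => f1 x + h * f2 x + f3 x) F (locally (a + h * b + c)).
Proof.
  intros H1 H2 H3 P [eps HP].
  pose proof (Rabs_pos h) as Hh.
  set (e := eps / (3 * (1 + Rabs h))).
  assert (He : 0 < e) by (unfold e; apply Rdiv_lt_0_compat; [apply cond_pos | lra]).
  assert (Heps : pos eps = e * (3 * (1 + Rabs h))) by (unfold e; field; lra).
  assert (G1 : F (fun x => Rabs (f1 x - a) < e)).
  { apply (H1 (fun y => Rabs (y - a) < e)). exists (mkposreal e He). intros y Hy. exact Hy. }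
  assert (G2 : F (fun x => Rabs (f2 x - b) < e)).
  { apply (H2 (fun y => Rabs (y - b) < e)). exists (mkposreal e He). intros y Hy. exact Hy. }
  assert (G3 : F (fun x => Rabs (f3 x - c) < e)).
  { apply (H3 (fun y => Rabs (y - c) < e)). exists (mkposreal e He). intros y Hy. exact Hy. }
  unfold filtermap. generalize (filter_and _ _ G1 (filter_and _ _ G2 G3)). apply filter_imp.
  intros x [A1 [A2 A3]]. apply HP. change (Rabs (f1 x + h * f2 x + f3 x - (a + h*b + c)) < eps).
  replace (f1 x + h * f2 x + f3 x - (a + h*b + c)) with ((f1 x - a) + h * (f2 x - b) + (f3 x - c)) by ring.
  assert (B2 : Rabs (h * (f2 x - b)) <= Rabs h * e).
  { rewrite Rabs_mult. apply Rmult_le_compat_l; lra. }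
  assert (0 <= e * Rabs h) by (apply Rmult_le_pos; lra).
  pose proof (Rabs_triang (f1 x - a + h * (f2 x - b)) (f3 x - c)).
  pose proof (Rabs_triang (f1 x - a) (h * (f2 x - b))).
  nra.
Qed.

Definition Gf (x : R) : R := P x - exp (- x) * ln x.

Lemma Gf_d x : 0 < x -> is_derive Gf x (exp (- x) * ln x).
Proof.
  intros Hx. unfold Gf. eapply is_derive_val.
  - apply (is_derive_minus (K:=R_AbsRing) (V:=R_NormedModule) P (fun x => exp (- x) * ln x)).
    + apply P_d; auto.
    + apply (is_derive_val _ x (- exp (- x) * ln x + exp (- x) / x)).
      auto_derive; [lra|]. req. field. lra. reflexivity.
  - change (g1 x - (- exp (- x) * ln x + exp (- x) / x) = exp (- x) * ln x).
    unfold g1. field. lra.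
Qed.

Lemma Gf_liminf Pinf : filterlim P (Rbar_locally p_infty) (locally Pinf) ->
  filterlim Gf (Rbar_locally p_infty) (locally Pinf).
Proof.
  intros HP. apply lim_pinf. intros eps Heps.
  destruct (lim_pinf_inv P Pinf HP (eps/2) ltac:(lra)) as [M HM].
  set (M' := Rmax (Rmax M 1) (- 2 * ln (eps / 4))).
  exists M'. intros x Hx.
  pose proof (Rmax_l (Rmax M 1) (- 2 * ln (eps / 4))). pose proof (Rmax_r (Rmax M 1) (- 2 * ln (eps / 4))).
  pose proof (Rmax_l M 1). pose proof (Rmax_r M 1). fold M' in H, H0.
  specialize (HM x ltac:(lra)).
  assert (Hl0 : 0 <= ln x) by (rewrite <- ln_1; apply ln_le; lra).
  assert (Hlx : ln x <= x) by (pose proof (ln_le_xm1 x ltac:(lra)); lra).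
  assert (Hx2 : x <= 2 * exp (x / 2)) by (pose proof (exp_ineq1_le (x/2)); lra).
  assert (E : exp (- x) * exp (x / 2) = exp (- x / 2)) by (rewrite <- exp_plus; f_equal; field).
  assert (Hs : exp (- x / 2) < eps / 4).
  { rewrite <- (exp_ln (eps / 4)) by lra. apply exp_increasing. lra. }
  pose proof (exp_pos (- x)).
  assert (B : exp (- x) * ln x <= eps / 2).
  { apply Rle_trans with (exp (- x) * (2 * exp (x / 2))). apply Rmult_le_compat_l; lra.
    replace (exp (- x) * (2 * exp (x / 2))) with (2 * (exp (- x) * exp (x / 2))) by ring. rewrite E. lra. }
  assert (0 <= exp (- x) * ln x) by (apply Rmult_le_pos; lra).
  unfold Gf. revert HM. split_Rabs; lra.
Qed.

Lemma Gf_lim0 Q0 : filterlim Q (at_right 0) (locally Q0) -> filterlim Gf (at_right 0) (locally Q0).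
Proof.
  intros HQ. apply lim_right0. intros eps Heps.
  destruct (lim_right0_inv Q Q0 HQ (eps/2) ltac:(lra)) as [d [Hd HQd]].
  exists (Rmin (Rmin 1 d) ((eps/4) * (eps/4))). split.
  { apply Rmin_glb_lt; [apply Rmin_glb_lt|]; nra. }
  intros x [Hx0 Hx]. pose proof (Rmin_l (Rmin 1 d) ((eps/4) * (eps/4))).
  pose proof (Rmin_r (Rmin 1 d) ((eps/4) * (eps/4))). pose proof (Rmin_l 1 d). pose proof (Rmin_r 1 d).
  specialize (HQd x ltac:(lra)).
  assert (Hsq : sqrt x < eps / 4) by (apply sqrt_small; lra).
  assert (Hsp : 0 < sqrt x) by (apply sqrt_lt_R0; lra).
  assert (Hxx : sqrt x * sqrt x = x) by (apply sqrt_sqrt; lra).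
  assert (Hln : - ln x <= 2 / sqrt x).
  { assert (E : ln (/ sqrt x) = - ln x / 2).
    { rewrite ln_Rinv by lra. rewrite sqrt_exp by lra. rewrite ln_exp. field. }
    pose proof (ln_le_xm1 (/ sqrt x) ltac:(apply Rinv_0_lt_compat; lra)).
    unfold Rdiv. lra. }
  assert (Hl0 : ln x <= 0) by (rewrite <- ln_1; apply ln_le; lra).
  pose proof (one_m_exp x ltac:(lra)). pose proof (u_bounds x Hx0).
  assert (B : (1 - exp (- x)) * (- ln x) <= 2 * sqrt x).
  { apply Rle_trans with (x * (2 / sqrt x)).
    - apply Rmult_le_compat; lra.
    - rewrite <- Hxx at 1. right. field. lra. }
  assert (0 <= (1 - exp (- x)) * (- ln x)) by (apply Rmult_le_pos; lra).
  unfold Gf. unfold Q in HQd.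
  replace (P x - exp (- x) * ln x - Q0) with ((P x - ln x - Q0) + (1 - exp (- x)) * ln x) by ring.
  revert HQd. split_Rabs; lra.
Qed.

Lemma GAM Q0 Pinf h : filterlim Q (at_right 0) (locally Q0) -> filterlim P (Rbar_locally p_infty) (locally Pinf) ->
  Rabs h <= 1/4 -> Rabs (Gamma (1 + h) - 1 - h * (Pinf - Q0)) <= 128 * h^2.
Proof.
  intros HQ HP Hh.
  destruct (CMP (Rh h) (32 * h^2)) as [l0 [l1 [Hl0 [Hl1 Hl]]]].
  - nra.
  - intros t Ht. apply Rh_cont; auto.
  - intros t Ht. unfold Rdiv. apply Rh_b0; auto.
  - intros t Ht. apply Rh_b1; auto.
  - assert (HG : is_RInt_gen (fun t => Rpower t (1 + h - 1) * exp (- t)) (at_right 0) (Rbar_locally p_infty)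
       ((0 + h * Pinf + l1) - (-1 + h * Q0 + l0))).
    { apply (GEN _ (fun x => - exp (- x) + h * Gf x + RInt (Rh h) 1 x)).
      - intros a b Ha Hb. assert (0 < Rmin a b) by (apply Rmin_glb_lt; lra).
        apply (is_RInt_derive (fun x => - exp (- x) + h * Gf x + RInt (Rh h) 1 x) _ a b).
        + intros x Hx. eapply is_derive_val.
          * apply (is_derive_plus (K:=R_AbsRing) (V:=R_NormedModule) (fun x => - exp (- x) + h * Gf x) (RInt (Rh h) 1)).
            apply (is_derive_plus (K:=R_AbsRing) (V:=R_NormedModule) (fun x => - exp (- x)) (fun x => h * Gf x)).
            -- apply (is_derive_val _ x (exp (- x))). auto_derive; auto. req. ring. reflexivity.
            -- apply is_derive_scal. apply Gf_d. lra.
            -- apply PRIM_d. intros; apply Rh_cont; auto. lra.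
          * change (exp (- x) + h * (exp (- x) * ln x) + Rh h x = Rpower x (1 + h - 1) * exp (- x)).
            unfold Rh, Rpower. replace (1 + h - 1) with h by ring. ring.
        + intros x Hx. apply (ex_derive_continuous (K:=R_AbsRing) (V:=R_NormedModule)).
          unfold Rpower. auto_derive. sc.
      - apply (lim3 (fun x => - exp (- x)) Gf (RInt (Rh h) 1)); auto.
        + apply lim_right0. intros eps Heps. exists eps. split; auto. intros x Hx.
          pose proof (one_m_exp x ltac:(lra)). pose proof (u_bounds x ltac:(lra)).
          rewrite Rabs_pos_eq; lra.
        + apply Gf_lim0; auto.
      - apply (lim3 (fun x => - exp (- x)) Gf (RInt (Rh h) 1)); auto.
        + apply lim_pinf. intros eps Heps. exists (Rmax 0 (- ln eps)). intros x Hx.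
          pose proof (Rmax_l 0 (- ln eps)). pose proof (Rmax_r 0 (- ln eps)).
          assert (exp (- x) < eps) by (rewrite <- (exp_ln eps) by lra; apply exp_increasing; lra).
          pose proof (exp_pos (- x)). rewrite Rminus_0_r, Rabs_Ropp, Rabs_pos_eq; lra.
        + apply Gf_liminf; auto. }
    unfold Gamma. rewrite (is_RInt_gen_unique (V:=R_CompleteNormedModule) _ _ HG).
    replace (0 + h * Pinf + l1 - (-1 + h * Q0 + l0) - 1 - h * (Pinf - Q0)) with (l1 - l0) by ring.
    lra.
Qed.

Theorem lemma1 :
  (forall x y : R, 0 < x -> x <= y -> fE x <= fE y) /\
  filterlim fE (at_right 0) (locally 0) /\
  is_lim fE p_infty 1 /\
  is_lim (fun t => (1 - fE t) / (exp (- t) / 2)) p_infty 1 /\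
  is_RInt_gen (fun t => 1 - fE t) (at_right 0) (Rbar_locally p_infty) euler_gamma.
Proof.
  split; [exact part1|]. split; [exact part2|]. split; [exact part3|]. split; [exact part4|].
  destruct Q0_ex as [Q0 HQ]. destruct Pinf_ex as [Pinf HP].
  assert (G1 : Gamma 1 = 1).
  { pose proof (GAM Q0 Pinf 0 HQ HP ltac:(rewrite Rabs_R0; lra)) as HG0.
    replace (1 + 0) with 1 in HG0 by ring. revert HG0. replace (128 * 0^2) with 0 by ring.
    split_Rabs; lra. }
  assert (HD : is_derive Gamma 1 (Pinf - Q0)).
  { apply is_derive_Reals. intros eps Heps.
    assert (Hd : 0 < Rmin (1/4) (eps/256)) by (apply Rmin_glb_lt; lra).
    exists (mkposreal _ Hd). intros h Hh0 Hh. simpl in Hh.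
    pose proof (Rmin_l (1/4) (eps/256)). pose proof (Rmin_r (1/4) (eps/256)).
    rewrite G1.
    pose proof (GAM Q0 Pinf h HQ HP ltac:(lra)) as HGh.
    replace ((Gamma (1+h) - 1)/h - (Pinf - Q0)) with ((Gamma (1+h) - 1 - h*(Pinf-Q0))/h) by (field; auto).
    rewrite Rabs_div by auto.
    assert (Hpos : 0 < Rabs h) by (apply Rabs_pos_lt; auto).
    apply (Rmult_lt_reg_r (Rabs h)); [lra|]. unfold Rdiv. rewrite Rmult_assoc, Rinv_l by lra.
    rewrite <- pow2_abs in HGh. nra. }
  unfold euler_gamma. rewrite (is_derive_unique _ _ _ HD).
  replace (- (Pinf - Q0)) with (Q0 - Pinf) by ring. apply I_val; auto.
Qed.
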